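(* With $\hat A=T(V)/I$, $\hat q$, and $\hat x_j=x_j+I$ as constructed below, the set consisting of $\hat 1=1+I$, $\hat q$, all products $\hat x_{j_1}\cdots\hat x_{j_m}$ with $m\ge1$ and $(j_1,\dots,j_m)\in J^m$, and all products $\hat x_{j_1}\cdots\hat x_{j_t}\,\hat q\,\hat x_{j_{t+1}}\cdots\hat x_{j_m}$ with $m\ge1$, $0\le t\le m$, $(j_1,\dots,j_m)\in J^m$, is a $\mathbf{k}$-basis of $\hat A$ (these elements being pairwise distinct for distinct index data).
   Context: Let $X=\{x_j:j\in J\}$ be a set, $\tilde q\notin X$ a symbol, $V$ the $\mathbf{k}$-vector space with basis $X\cup\{\tilde q\}$, $T(V)$ its tensor algebra, $I$ the two-sided ideal of $T(V)$ generated by $\tilde q\otimes\tilde q-\tilde q$ and all $\tilde q\otimes a\otimes\tilde q-\tilde q\otimes a$ for $a\in T(V)$; $\hat A=T(V)/I$, $\hat q=\tilde q+I$, $\hat x_j=x_j+I$. *)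

(* Defs.v *)
(* The tensor algebra T(V) over the field k, V with basis
   X ∪ {q~}, is modelled as the free associative algebra on the alphabet
   option J (None = q~, Some j = x_j): an element is a coefficient function
   on words, with finite support. *)
From HB Require Import structures.
From mathcomp Require Import all_boot all_order all_algebra.
From Stdlib Require List ClassicalEpsilon.
Set Implicit Arguments. Unset Strict Implicit. Unset Printing Implicit Defensive.
Import GRing.Theory.
Local Open Scope ring_scope.

Section TensorAlgebra.
Variables (k : fieldType) (J : Type).

Definition word := seq (option J).
Definition tensor := word -> k.

Definition fin_supp (f : tensor) : Prop :=
  exists s : seq word, forall w, f w <> 0 -> List.In w s.

Definition tmul (f g : tensor) : tensor :=
  fun w => \sum_(i < (size w).+1) f (take i w) * g (drop i w).

Definition mono (u : word) : tensor :=
  fun w => if ClassicalEpsilon.excluded_middle_informative (w = u) then 1 else 0.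

Definition tone : tensor := mono [::].
Definition tq : tensor := mono [:: None].

Definition genI (g : tensor) : Prop :=
  (forall w, g w = tmul tq tq w - tq w) \/
  exists a, fin_supp a /\
    forall w, g w = tmul (tmul tq a) tq w - tmul tq a w.

Definition inI (f : tensor) : Prop :=
  exists l : seq (tensor * tensor * tensor),
    (forall t, List.In t l -> [/\ fin_supp t.1.1, genI t.1.2 & fin_supp t.2]) /\
    forall w, f w = \sum_(t <- l) tmul (tmul t.1.1 t.1.2) t.2 w.

Inductive bindex :=
| bOne
| bQ
| bX of seq J
| bXQ of seq J & nat.

Definition bvalid (i : bindex) : Prop :=
  match i with
  | bOne | bQ => True
  | bX s => (0 < size s)%N
  | bXQ s t => (0 < size s)%N /\ (t <= size s)%N
  end.

Definition bword (i : bindex) : word :=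
  match i with
  | bOne => [::]
  | bQ => [:: None]
  | bX s => map Some s
  | bXQ s t => map Some (take t s) ++ None :: map Some (drop t s)
  end.

Definition lincomb (l : seq (k * bindex)) : tensor :=
  fun w => \sum_(p <- l) p.1 * mono (bword p.2) w.

End TensorAlgebra.

(* Main.v *)
Require Import Defs.
From HB Require Import structures.
From mathcomp Require Import all_boot all_order all_algebra.
From mathcomp Require Import zify.
From Stdlib Require List Classical ClassicalEpsilon FunctionalExtensionality.
Set Implicit Arguments. Unset Strict Implicit. Unset Printing Implicit Defensive.
Import GRing.Theory.
Local Open Scope ring_scope.

Section Aux.
Variables (k : fieldType) (J : Type).
Notation tensor := (tensor k J).
Notation word := (word J).
Notation mono := (@mono k J).

Lemma mono_eq (u : word) : mono u u = 1.
Proof. rewrite /Defs.mono; by case: ClassicalEpsilon.excluded_middle_informative. Qed.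

Lemma mono_neq (u w : word) : w <> u -> mono u w = 0.
Proof. rewrite /Defs.mono=> H; by case: ClassicalEpsilon.excluded_middle_informative. Qed.

Lemma mono_mul (u v w : word) : tmul (mono u) (mono v) w = mono (u ++ v) w.
Proof.
rewrite /tmul; case: (Classical_Prop.classic (w = u ++ v)) => [->|Hne].
  have Hlt : (size u < (size (u ++ v)).+1)%N by rewrite size_cat ltnS leq_addr.
  rewrite (bigD1 (Ordinal Hlt)) //= take_size_cat // drop_size_cat // !mono_eq mulr1.
  rewrite big1 ?addr0 // => i Hi.
  rewrite mono_neq ?mul0r // => Ht.
  have : size (take i (u ++ v)) = size u by rewrite Ht.
  rewrite size_takel; last by rewrite -ltnS.
  move=> Hs; move: Hi; rewrite -(inj_eq val_inj) /= Hs eqxx //.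
rewrite mono_neq // big1 // => i _.
case: (Classical_Prop.classic (take i w = u)) => [Ht|Ht]; last by rewrite mono_neq ?mul0r.
case: (Classical_Prop.classic (drop i w = v)) => [Hd|Hd]; last by rewrite (mono_neq Hd) mulr0.
by exfalso; apply: Hne; rewrite -Ht -Hd cat_take_drop.
Qed.

Lemma tmulBl (f g h : tensor) w :
  tmul (fun x => f x - g x) h w = tmul f h w - tmul g h w.
Proof. rewrite /tmul -sumrB; apply: eq_bigr => i _; by rewrite mulrBl. Qed.
Lemma tmulBr (f g h : tensor) w :
  tmul h (fun x => f x - g x) w = tmul h f w - tmul h g w.
Proof. rewrite /tmul -sumrB; apply: eq_bigr => i _; by rewrite mulrBr. Qed.
Lemma tmulZl c (f h : tensor) w :
  tmul (fun x => c * f x) h w = c * tmul f h w.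
Proof. rewrite /tmul mulr_sumr; apply: eq_bigr => i _; by rewrite mulrA. Qed.
Lemma tmulZr c (f h : tensor) w :
  tmul h (fun x => c * f x) w = c * tmul h f w.
Proof. rewrite /tmul mulr_sumr; apply: eq_bigr => i _; by rewrite mulrCA. Qed.
Lemma tmul_suml I (r : seq I) (F : I -> tensor) h w :
  tmul (fun x => \sum_(i <- r) F i x) h w = \sum_(i <- r) tmul (F i) h w.
Proof.
rewrite /tmul (eq_bigr (fun j : 'I_(size w).+1 => \sum_(i <- r) F i (take j w) * h (drop j w))); last by move=> j _; rewrite mulr_suml.
by rewrite exchange_big.
Qed.
Lemma tmul_sumr I (r : seq I) (F : I -> tensor) h w :
  tmul h (fun x => \sum_(i <- r) F i x) w = \sum_(i <- r) tmul h (F i) w.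
Proof.
rewrite /tmul (eq_bigr (fun j : 'I_(size w).+1 => \sum_(i <- r) h (take j w) * F i (drop j w))); last by move=> j _; rewrite mulr_sumr.
by rewrite exchange_big.
Qed.


Definition wdec (x y : word) : {x = y} + {x <> y} :=
  ClassicalEpsilon.excluded_middle_informative (x = y).

Lemma sum_nodup (s : seq word) (c : word -> k) w : List.NoDup s ->
  (List.In w s -> \sum_(u <- s) c u * mono u w = c w) /\
  (~ List.In w s -> \sum_(u <- s) c u * mono u w = 0).
Proof.
elim: s => [|a s IH] Hn; first by split=> // H; rewrite big_nil.
inversion Hn as [|a' s' Hna Hns]; subst.
have [IH1 IH2] := IH Hns; rewrite big_cons; split.
  move=> [Ha|Hin].
    subst; rewrite mono_eq mulr1 IH2 ?addr0 //.
  rewrite IH1 // mono_neq ?mulr0 ?add0r // => E; subst; exact: Hna Hin.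
move=> Hin; rewrite IH2 ?addr0; last by move=> H; apply: Hin; right.
by rewrite mono_neq ?mulr0 // => E; apply: Hin; left.
Qed.

Lemma supp_repr (f : tensor) : fin_supp f ->
  exists s : seq word, f = fun w => \sum_(u <- s) f u * mono u w.
Proof.
move=> [s Hs]; exists (List.nodup wdec s).
apply: FunctionalExtensionality.functional_extensionality => w.
have Hn := List.NoDup_nodup wdec s.
have [H1 H2] := sum_nodup f w Hn.
case: (Classical_Prop.classic (List.In w (List.nodup wdec s))) => Hin.
  by rewrite H1.
rewrite H2 //; apply: Classical_Prop.NNPP => Hf; apply: Hin.
by apply/List.nodup_In; apply: Hs.
Qed.

Lemma inI0 : inI (fun _ : word => (0 : k)).
Proof. exists [::]; split=> // w; by rewrite big_nil. Qed.

Lemma inI_ext (f g : tensor) : inI f -> (forall w, f w = g w) -> inI g.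
Proof. move=> [l [H1 H2]] E; exists l; split=> // w; by rewrite -E. Qed.

Lemma inI_add (f g : tensor) : inI f -> inI g -> inI (fun w => f w + g w).
Proof.
move=> [l1 [H1 E1]] [l2 [H2 E2]]; exists (l1 ++ l2); split.
  by move=> t Ht; case: (List.in_app_or _ _ _ Ht) => ?; [apply: H1|apply: H2].
by move=> w; rewrite big_cat E1 E2.
Qed.

Lemma inI_scale c (f : tensor) : inI f -> inI (fun w => c * f w).
Proof.
move=> [l [H1 E1]].
exists [seq ((fun w => c * t.1.1 w, t.1.2), t.2) | t <- l]; split.
  move=> t Ht; case: (proj1 (List.in_map_iff _ _ _) Ht) => t0 [<- Ht0] /=.
  have [[s Hs] Hg Hb] := H1 t0 Ht0; split=> //.
  exists s => w Hw; apply: Hs => H0; apply: Hw; by rewrite H0 mulr0.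
move=> w; rewrite E1 big_map mulr_sumr; apply: eq_bigr => t _ /=.
have -> : tmul (fun w => c * t.1.1 w) t.1.2 = fun x => c * tmul t.1.1 t.1.2 x.
  apply: FunctionalExtensionality.functional_extensionality => x; exact: tmulZl.
by rewrite tmulZl.
Qed.

Definition isS (o : option J) := if o is Some _ then true else false.
Definition rm (u : word) : word := filter isS u.
Fixpoint red (u : word) : word :=
  match u with
  | [::] => [::]
  | Some j :: u' => Some j :: red u'
  | None :: u' => None :: rm u'
  end.

Lemma red_gen (x y z : word) :
  red (x ++ None :: y ++ None :: z) = red (x ++ None :: y ++ z).
Proof.
elim: x => [|[j|] x IH] /=.
- by rewrite /rm !filter_cat.
- by rewrite IH.
- by rewrite /rm !filter_cat /= !filter_cat.
Qed.

Lemma inI_gen (x y z : word) :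
  inI (fun w => mono (x ++ None :: y ++ None :: z) w - mono (x ++ None :: y ++ z) w).
Proof.
pose g : tensor := fun w => tmul (tmul (@tq k J) (mono y)) (@tq k J) w - tmul (@tq k J) (mono y) w.
have Eg : g = fun w => mono (None :: y ++ [:: None]) w - mono (None :: y) w.
  apply: FunctionalExtensionality.functional_extensionality => w.
  rewrite /g.
  have -> : tmul (@tq k J) (mono y) = mono (None :: y).
    by apply: FunctionalExtensionality.functional_extensionality => v; rewrite /tq mono_mul.
  by rewrite /tq !mono_mul.
exists [:: (mono x, g, mono z)]; split.
  move=> t [<-|//]; split=> /=.
  - by exists [:: x] => w Hw; left; apply: Classical_Prop.NNPP => H; apply: Hw; rewrite mono_neq //; auto.
  - right; exists (mono y); split=> //.
    by exists [:: y] => w Hw; left; apply: Classical_Prop.NNPP => H; apply: Hw; rewrite mono_neq //; auto.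
  - by exists [:: z] => w Hw; left; apply: Classical_Prop.NNPP => H; apply: Hw; rewrite mono_neq //; auto.
move=> w; rewrite big_cons big_nil addr0 /=.
have -> : tmul (mono x) g = fun w => mono (x ++ None :: y ++ [:: None]) w - mono (x ++ None :: y) w.
  apply: FunctionalExtensionality.functional_extensionality => v.
  by rewrite Eg tmulBr !mono_mul.
rewrite tmulBl !mono_mul -!catA /= -!catA /=. done.
Qed.

Lemma inI_step (p v : word) : (exists x y, p = x ++ None :: y) ->
  inI (fun w => mono (p ++ v) w - mono (p ++ rm v) w).
Proof.
elim: v p => [|[j|] v IH] p Hp /=.
- by apply: (inI_ext inI0) => w /=; rewrite subrr.
- have := IH (p ++ [:: Some j]); rewrite -!catA /=; apply.
  case: Hp => x [y ->]; exists x, (y ++ [:: Some j]); by rewrite -catA.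
- case: (Hp) => x [y Ep].
  move: (inI_add (inI_gen x y v) (IH p Hp)) => H; apply: (inI_ext H) => w.
  by rewrite Ep -!catA /= addrA subrK.
Qed.

Lemma mono_red (u x : word) : inI (fun w => mono (x ++ u) w - mono (x ++ red u) w).
Proof.
elim: u x => [|[j|] u IH] x /=.
- by apply: (inI_ext inI0) => w /=; rewrite subrr.
- by have := IH (x ++ [:: Some j]); rewrite -!catA.
- have := inI_step u (p := x ++ [:: None]); rewrite -!catA; apply.
  by exists x, [::].
Qed.


Lemma rm_map (s : seq J) : rm (map Some s) = map Some s.
Proof. by elim: s => //= a s ->. Qed.

Lemma pmap_rm (u : word) : rm u = map Some (pmap id u).
Proof. by elim: u => //= [[a|] u] /= ->. Qed.

Lemma exists_idx (u : word) : exists i, bvalid i /\ bword i = red u.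
Proof.
elim: u => [|[j|] u [i [Hv Hi]]] /=.
- by exists (bOne J).
- rewrite -Hi; case: i Hv {Hi} => [|| s | s t] /= Hv.
  + by exists (bX [:: j]).
  + by exists (bXQ [:: j] 1).
  + by exists (bX (j :: s)).
  + exists (bXQ (j :: s) t.+1) => /=; split=> //; case: Hv => *; by split.
- rewrite pmap_rm; case E: (pmap id u) => [|a s].
  + by exists (bQ J).
  + by exists (bXQ (a :: s) 0).
Qed.

Lemma span_aux (s : seq word) (c : word -> k) : exists l : seq (k * bindex J),
  (forall p, List.In p l -> bvalid p.2) /\
  inI (fun w => \sum_(u <- s) c u * mono u w - lincomb l w).
Proof.
elim: s => [|u s [l [Hl HI]]].
  exists [::]; split=> //; apply: (inI_ext inI0) => w.
  by rewrite /lincomb !big_nil subrr.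
have [i [Hv Hi]] := exists_idx u.
exists ((c u, i) :: l); split.
  by move=> p [<-|Hp] //; apply: Hl.
move: (inI_add (inI_scale (c u) (mono_red u [::])) HI) => H.
apply: (inI_ext H) => w /=.
rewrite /lincomb !big_cons /= Hi -/(lincomb l w).
by rewrite mulrBr opprD addrACA.
Qed.


Definition gA (x y z : word) : word := x ++ None :: y ++ None :: z.
Definition gB (x y z : word) : word := x ++ None :: y ++ z.
Definition jterm (m : k * word * word * word) : tensor :=
  fun w => m.1.1.1 * (mono (gA m.1.1.2 m.1.2 m.2) w - mono (gB m.1.1.2 m.1.2 m.2) w).
Definition jsum (M : seq (k * word * word * word)) : tensor :=
  fun w => \sum_(m <- M) jterm m w.
Definition JF (f : tensor) := exists M, forall w, f w = jsum M w.

Lemma JF_add f g : JF f -> JF g -> JF (fun w => f w + g w).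
Proof.
move=> [M1 E1] [M2 E2]; exists (M1 ++ M2) => w; by rewrite /jsum big_cat E1 E2.
Qed.

Lemma jsum_scale c M w :
  jsum [seq (c * m.1.1.1, m.1.1.2, m.1.2, m.2) | m <- M] w = c * jsum M w.
Proof.
rewrite /jsum big_map mulr_sumr; apply: eq_bigr => m _; by rewrite /jterm /= mulrA.
Qed.

Lemma JF_lin I (s : seq I) (c : I -> k) (Mf : I -> seq (k * word * word * word)) :
  JF (fun w => \sum_(i <- s) c i * jsum (Mf i) w).
Proof.
elim: s => [|i s [M E]].
  by exists [::] => w; rewrite /jsum !big_nil.
exists ([seq (c i * m.1.1.1, m.1.1.2, m.1.2, m.2) | m <- Mf i] ++ M) => w.
by rewrite big_cons E -jsum_scale /jsum big_cat.
Qed.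

Lemma tmul_mono_jsum_l u M w :
  tmul (mono u) (jsum M) w = jsum [seq (m.1.1.1, u ++ m.1.1.2, m.1.2, m.2) | m <- M] w.
Proof.
rewrite /jsum (tmul_sumr M jterm) big_map; apply: eq_bigr => m _.
by rewrite /jterm tmulZr tmulBr !mono_mul /gA /gB /= !catA.
Qed.

Lemma tmul_mono_jsum_r u M w :
  tmul (jsum M) (mono u) w = jsum [seq (m.1.1.1, m.1.1.2, m.1.2, m.2 ++ u) | m <- M] w.
Proof.
rewrite /jsum (tmul_suml M jterm) big_map; apply: eq_bigr => m _.
rewrite /jterm tmulZl tmulBl !mono_mul /gA /gB /= -!catA /=. by rewrite -!catA.
Qed.

Lemma JF_mul_l (a g : tensor) : fin_supp a -> JF g -> JF (tmul a g).
Proof.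
move=> Ha [M E].
have -> : g = jsum M by apply: FunctionalExtensionality.functional_extensionality.
have [s Es] := supp_repr Ha; rewrite Es.
have [M' E'] := JF_lin s a (fun u => [seq (m.1.1.1, u ++ m.1.1.2, m.1.2, m.2) | m <- M]).
exists M' => w; rewrite -E'.
rewrite (tmul_suml s (fun u x => a u * mono u x)); apply: eq_bigr => u _.
by rewrite tmulZl tmul_mono_jsum_l.
Qed.

Lemma JF_mul_r (a g : tensor) : fin_supp a -> JF g -> JF (tmul g a).
Proof.
move=> Ha [M E].
have -> : g = jsum M by apply: FunctionalExtensionality.functional_extensionality.
have [s Es] := supp_repr Ha; rewrite Es.
have [M' E'] := JF_lin s a (fun u => [seq (m.1.1.1, m.1.1.2, m.1.2, m.2 ++ u) | m <- M]).
exists M' => w; rewrite -E'.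
rewrite (tmul_sumr s (fun u x => a u * mono u x)); apply: eq_bigr => u _.
by rewrite tmulZr tmul_mono_jsum_r.
Qed.

Lemma JF_gen g : genI g -> JF g.
Proof.
case=> [E|[a [Ha E]]].
  exists [:: (1, [::], [::], [::])] => w.
  by rewrite E /jsum big_cons big_nil addr0 /jterm mul1r /tq mono_mul.
have [s Es] := supp_repr Ha.
have E1 : tmul (@tq k J) a = fun w => \sum_(u <- s) a u * mono (None :: u) w.
  apply: FunctionalExtensionality.functional_extensionality => w.
  rewrite {1}Es (tmul_sumr s (fun u x => a u * mono u x)); apply: eq_bigr => u _.
  by rewrite tmulZr /tq mono_mul.
exists [seq (a u, [::], u, [::]) | u <- s] => w.
rewrite E E1 (tmul_suml s (fun u x => a u * mono (None :: u) x)) /jsum big_map -sumrB.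
apply: eq_bigr => u _; rewrite tmulZl /tq mono_mul /jterm /gA /gB /= cats0.
by rewrite mulrBr.
Qed.

Lemma JF_inI f : inI f -> JF f.
Proof.
move=> [l [Hl E]].
suff : JF (fun w => \sum_(t <- l) tmul (tmul t.1.1 t.1.2) t.2 w).
  by move=> [M EM]; exists M => w; rewrite E EM.
elim: l Hl {E} => [|t l IH] Hl.
  by exists [::] => w; rewrite /jsum !big_nil.
have [Ha Hg Hb] := Hl t (or_introl erefl).
have [M EM] := JF_add (JF_mul_r Hb (JF_mul_l Ha (JF_gen Hg))) (IH (fun t' H => Hl t' (or_intror H))).
by exists M => w; rewrite big_cons EM.
Qed.


Definition ceq (x y : word) : bool :=
  if ClassicalEpsilon.excluded_middle_informative (x = y) then true else false.

Lemma ceqP x y : reflect (x = y) (ceq x y).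
Proof. rewrite /ceq; case: ClassicalEpsilon.excluded_middle_informative => H; by constructor. Qed.

Lemma ceqC x y : ceq x y = ceq y x.
Proof. by apply/idP/idP => /ceqP ->; apply/ceqP. Qed.

Lemma monoE u w : mono u w = if ceq w u then 1 else 0.
Proof. by rewrite /Defs.mono /ceq; case: ClassicalEpsilon.excluded_middle_informative. Qed.

Lemma split_sum (L : seq (k * word)) (G : k * word -> k) u :
  \sum_(p <- L) G p = \sum_(p <- L) (if ceq p.2 u then G p else 0)
     + \sum_(p <- filter (fun p => ~~ ceq p.2 u) L) G p.
Proof.
rewrite big_filter [X in _ + X]big_mkcond -big_split; apply: eq_bigr => p _ /=.
by case: ceq => /=; rewrite ?addr0 ?add0r.
Qed.

Lemma key0 n (L : seq (k * word)) : (size L <= n)%N ->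
  (forall w, \sum_(p <- L) p.1 * mono p.2 w = 0) ->
  forall r, \sum_(p <- L) (if ceq (red p.2) r then p.1 else 0) = 0.
Proof.
elim: n L => [|n IH] [|[c u] L'] //= Hs H r; rewrite ?big_nil //.
set L := (c, u) :: L'.
set S := \sum_(p <- L) (if ceq p.2 u then p.1 else 0).
have HS : S = 0.
  rewrite -(H u); apply: eq_bigr => p _; rewrite monoE ceqC.
  by case: ceq; rewrite ?mulr1 ?mulr0.
have Hs2 : (size (filter (fun p => ~~ ceq p.2 u) L) <= n)%N.
  rewrite /L /= (introT (ceqP u u) erefl) /=.
  by rewrite size_filter; apply: leq_trans (count_size _ _) _.
have H2 : forall w, \sum_(p <- filter (fun p => ~~ ceq p.2 u) L) p.1 * mono p.2 w = 0.
  move=> w; have := H w; rewrite (split_sum _ _ u).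
  have -> : \sum_(p <- L) (if ceq p.2 u then p.1 * mono p.2 w else 0) = S * mono u w.
    rewrite /S mulr_suml; apply: eq_bigr => p _.
    by case: (ceqP p.2 u) => [->|]; rewrite ?mul0r.
  by rewrite HS mul0r add0r.
rewrite (split_sum _ _ u) (IH _ Hs2 H2 r) addr0.
rewrite (eq_bigr (fun p => if ceq (red u) r then (if ceq p.2 u then p.1 else 0) else 0)).
  by case: ceq; [exact: HS | rewrite big1].
move=> p _; by case: (ceqP p.2 u) => [->|]; case: ceq.
Qed.


Lemma red_map (s : seq J) : red (map Some s) = map Some s.
Proof. by elim: s => //= a s ->. Qed.

Lemma red_bword (i : bindex J) : red (bword i) = bword i.
Proof.
case: i => [||s|s t] //=; first exact: red_map.
elim: (take t s) => [|a s' IH] /=; first by rewrite rm_map.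
by rewrite IH.
Qed.

Lemma pmap_map (s : seq J) : pmap id (map Some s) = s.
Proof. by elim: s => //= a s ->. Qed.

Definition notS (o : option J) := ~~ isS o.

Lemma has_map (s : seq J) : has notS (map Some s) = false.
Proof. by elim: s. Qed.

Lemma find_XQ (a b : seq J) : find notS (map Some a ++ None :: map Some b) = size a.
Proof. by elim: a => //= x a ->. Qed.

Lemma bword_inj (i j : bindex J) : bvalid i -> bvalid j -> bword i = bword j -> i = j.
Proof.
case: i => [||s|s t]; case: j => [||s' |s' t'] //= Hi Hj E.
all: repeat match goal with H : _ /\ _ |- _ => destruct H end.
all: try by move/(congr1 (has notS)): E; rewrite /= ?has_cat /= ?has_map => HH.
all: try by move/(congr1 size): E; rewrite /= ?size_cat /= ?size_map ?size_takel ?size_drop //; lia.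
- by rewrite (inj_map (@Some_inj _) E).
- have E1 := congr1 (pmap id) E; rewrite !pmap_cat /= !pmap_map !cat_take_drop in E1.
  subst s'; have E2 := congr1 (find notS) E; rewrite !find_XQ !size_takel in E2 => //.
  by rewrite E2.
Qed.



Lemma sum0_in I (l : seq I) (F : I -> k) :
  (forall q, List.In q l -> F q = 0) -> \sum_(q <- l) F q = 0.
Proof.
elim: l => [|a l IH] H; first by rewrite big_nil.
rewrite big_cons H ?IH ?addr0 //; [by move=> q Hq; apply: H; right | by left].
Qed.

Lemma pick_sum (l : seq (k * bindex J)) p :
  (forall q, List.In q l -> bvalid q.2) -> List.NoDup (map snd l) -> List.In p l ->
  \sum_(q <- l) (if ceq (red (bword q.2)) (bword p.2) then q.1 else 0) = p.1.
Proof.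
elim: l => [//|q0 l IH] Hv Hn Hp.
inversion Hn as [|a b Hq0 Hn']; subst.
have Hv' : forall q, List.In q l -> bvalid q.2 by move=> q Hq; apply: Hv; right.
rewrite big_cons red_bword.
case: Hp => [<-|Hp].
  rewrite (introT (ceqP _ _) erefl) sum0_in ?addr0 // => q Hq.
  rewrite red_bword; case: ceqP => // E.
  exfalso; apply: Hq0; rewrite -(bword_inj (Hv' q Hq) (Hv q0 (or_introl erefl)) E).
  by apply: List.in_map.
rewrite IH //; case: ceqP => [E|_]; last by rewrite add0r.
exfalso; apply: Hq0; rewrite (bword_inj (Hv q0 (or_introl erefl)) (Hv' p Hp) E).
by apply: List.in_map.
Qed.

Lemma indep (l : seq (k * bindex J)) :
     (forall p, List.In p l -> bvalid p.2) ->
     List.NoDup (map snd l) ->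
     inI (lincomb l) ->
     forall p, List.In p l -> p.1 = 0.
Proof.
move=> Hv Hn HI p Hp.
have [M EM] := JF_inI HI.
pose L := [seq (q.1, bword q.2) | q <- l] ++ [seq (- m.1.1.1, gA m.1.1.2 m.1.2 m.2) | m <- M]
          ++ [seq (m.1.1.1, gB m.1.1.2 m.1.2 m.2) | m <- M].
have HL : forall w, \sum_(x <- L) x.1 * mono x.2 w = 0.
  move=> w; transitivity (lincomb l w - jsum M w); last by rewrite EM subrr.
  rewrite /L !big_cat !big_map /=; congr (_ + _).
  rewrite /jsum -sumrN -big_split; apply: eq_bigr => m _ /=.
  by rewrite /jterm mulrBr opprB mulNr addrC.
have := key0 (leqnn (size L)) HL (bword p.2).
rewrite /L !big_cat !big_map /=.
have -> : \sum_(j <- M) (if ceq (red (gA j.1.1.2 j.1.2 j.2)) (bword p.2) then - j.1.1.1 else 0)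
   + \sum_(j <- M) (if ceq (red (gB j.1.1.2 j.1.2 j.2)) (bword p.2) then j.1.1.1 else 0) = 0.
  rewrite -big_split big1 // => m _ /=; rewrite /gA /gB red_gen.
  by case: ceq; rewrite ?addNr ?addr0.
by rewrite addr0 pick_sum.
Qed.

End Aux.

Theorem proposition3p2 (k : fieldType) (J : Type) :
  (* spanning: every element of T(V) is congruent mod I to a combination *)
  (forall f : tensor k J, fin_supp f ->
     exists l : seq (k * bindex J),
       (forall p, List.In p l -> bvalid p.2) /\
       inI (fun w => f w - lincomb l w)) /\
  (* linear independence of the classes modulo I *)
  (forall l : seq (k * bindex J),
     (forall p, List.In p l -> bvalid p.2) ->
     List.NoDup (map snd l) ->
     inI (lincomb l) ->
     forall p, List.In p l -> p.1 = 0) /\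
  (* the classes are pairwise distinct for distinct index data *)
  (forall i j : bindex J, bvalid i -> bvalid j -> i <> j ->
     ~ inI (fun w => mono k (bword i) w - mono k (bword j) w)).
Proof.
split; [|split].
- move=> f Hf; have [s Es] := supp_repr Hf.
  have [l [Hl HI]] := span_aux s f; exists l; split=> //.
  apply: (inI_ext HI) => w.
  by have /= <- := congr1 (fun g => g w) Es.
- exact: indep.
- move=> i j Hi Hj Hij HI.
  have H1 : inI (lincomb [:: (1 : k, i); (-1, j)]).
    apply: (inI_ext HI) => w.
    by rewrite /lincomb !big_cons big_nil /= mul1r mulN1r addr0.
  have Hv : forall p, List.In p [:: (1 : k, i); (-1, j)] -> bvalid p.2.
    by move=> p [<-|[<-|[]]].
  have Hn : List.NoDup (map snd [:: (1 : k, i); (-1, j)]).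
    constructor; last by constructor; [case | constructor].
    by move=> [E|[]]; apply: Hij.
  have := indep Hv Hn H1 (or_introl erefl).
  by move=> /eqP; rewrite oner_eq0.
Qed.
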